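(* Let $\alpha\in(0,1)$. (i) Let $m\ge 2$ be even and $A=\{a_1,\dots,a_m\}$. Let $\mathcal E$ be the election with two agents whose preferences are $$\sigma_1:\ a_1\succ\!\!\succ a_2\succ\!\!\succ\cdots\succ\!\!\succ a_{m/2+1}\succ a_{m/2+2}\succ\cdots\succ a_m,$$ $$\sigma_2:\ a_{m/2+1}\succ a_{m/2+2}\succ\cdots\succ a_m\succ a_1\succ\cdots\succ a_{m/2}.$$ Then $$\mathsf{dist}_\alpha(a_1,\mathcal E)=\frac{1+2\alpha^{m/2}-\alpha^m}{\alpha^m+1}.$$ (ii) If $m\ge 3$ is odd, there exists an election $\mathcal E'$ with $m$ alternatives, including an alternative $a_1$, such that $$\mathsf{dist}_\alpha(a_1,\mathcal E')=\frac{1+2\alpha^{(m-1)/2}-\alpha^{m-1}}{\alpha^{m-1}+1}.$$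
   Context: A preference $\sigma_i=(\pi_i,\Join_i)$ is a ranking $\pi_i:[m]\to A$ (a bijection, $\pi_i(1)$ most preferred) together with $\Join_i:[m-1]\to\{\succ,\succ\!\!\succ\}$. The displayed chains list $\pi_i(1),\pi_i(2),\dots$ with the symbol $\Join_i(j)$ between positions $j$ and $j+1$. A metric $d$ on agents and alternatives is nonnegative and symmetric, satisfies the triangle inequality, and has $d(x,x)=0$. The profile is $\alpha$-consistent with $d$ (mandatory elicitation) if for all $i$ and $j\in[m-1]$: - $\Join_i(j)=\,\succ$ implies $d(i,\pi_i(j+1))\ge d(i,\pi_i(j))>\alpha d(i,\pi_i(j+1))$; - $\Join_i(j)=\,\succ\!\!\succ$ implies $d(i,\pi_i(j))\le\alpha d(i,\pi_i(j+1))$. $\mathsf{dist}_\alpha(a,\mathcal E)=\sup_d\sum_i d(i,a)/\min_b\sum_i d(i,b)$, with the supremum over general metrics $d$ with which the profile is $\alpha$-consistent. *)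

(* Defs.v *)
From HB Require Import structures.
From mathcomp Require Import all_boot all_order all_algebra.
From mathcomp Require Import reals.
Set Implicit Arguments. Unset Strict Implicit. Unset Printing Implicit Defensive.
Import Order.TTheory GRing.Theory Num.Theory.
Local Open Scope ring_scope.

(* Alternatives are 'I_m; positions in a ranking are 0-indexed naturals
   j < m (paper position j+1).  strong j = true means the symbol between
   positions j and j+1 is "≻≻", false means "≻". *)
Record pref (m : nat) := Pref { rank : nat -> 'I_m; strong : nat -> bool }.

Definition valid_pref (m : nat) (p : pref m) : Prop :=
  (forall j1 j2, (j1 < m)%N -> (j2 < m)%N -> rank p j1 = rank p j2 -> j1 = j2) /\
  (forall a : 'I_m, exists2 j, (j < m)%N & rank p j = a).

Definition election (n m : nat) := 'I_n -> pref m.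

Definition valid_election (n m : nat) (E : election n m) : Prop :=
  forall i, valid_pref (E i).

(* points of the metric space: agents (inl) and alternatives (inr) *)
Definition point (n m : nat) := ('I_n + 'I_m)%type.

Definition is_metric (R : realType) (T : Type) (d : T -> T -> R) : Prop :=
  [/\ (forall x y, 0 <= d x y), (forall x y, d x y = d y x),
      (forall x y z, d x z <= d x y + d y z) & (forall x, d x x = 0)].

Definition consistent (R : realType) (n m : nat) (alpha : R)
  (E : election n m) (d : point n m -> point n m -> R) : Prop :=
  forall (i : 'I_n) (j : nat), (j.+1 < m)%N ->
    let x := d (inl i) (inr (rank (E i) j)) in
    let y := d (inl i) (inr (rank (E i) j.+1)) in
    if strong (E i) j then x <= alpha * y else (x <= y) && (alpha * y < x).

Definition SC (R : realType) (n m : nat) (d : point n m -> point n m -> R)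
  (a : 'I_m) : R := \sum_(i < n) d (inl i) (inr a).

Definition is_opt (R : realType) (n m : nat) (d : point n m -> point n m -> R)
  (v : R) : Prop :=
  (exists b, SC d b = v) /\ (forall b, v <= SC d b).

(* ratios SC(a)/min_b SC(b) over all metrics consistent with E
   (with a positive optimum, so that the ratio is defined) *)
Definition ratio_set (R : realType) (n m : nat) (alpha : R) (E : election n m)
  (a : 'I_m) (r : R) : Prop :=
  exists d : point n m -> point n m -> R,
    [/\ is_metric d, consistent alpha E d &
        exists v, [/\ is_opt d v, 0 < v & r = SC d a / v]].

Definition dist_is (R : realType) (n m : nat) (alpha : R) (E : election n m)
  (a : 'I_m) (D : R) : Prop :=
  (forall r, ratio_set alpha E a r -> r <= D) /\
  (forall u, (forall r, ratio_set alpha E a r -> r <= u) -> D <= u).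

Definition ord_mod (m : nat) (Hm : (0 < m)%N) (j : nat) : 'I_m :=
  Ordinal (ltn_pmod j Hm).

(* The two-agent election of part (i); alternative a_{t+1} is index t.
   sigma_1: a_1 ≻≻ ... ≻≻ a_{m/2+1} ≻ ... ≻ a_m
   sigma_2: a_{m/2+1} ≻ ... ≻ a_m ≻ a_1 ≻ ... ≻ a_{m/2} *)
Definition sigma1 (m : nat) (Hm : (0 < m)%N) : pref m :=
  Pref (ord_mod Hm) (fun j => (j < m./2)%N).
Definition sigma2 (m : nat) (Hm : (0 < m)%N) : pref m :=
  Pref (fun j => ord_mod Hm (j + m./2)) (fun _ => false).

Definition E_even (m : nat) (Hm : (0 < m)%N) : election 2 m :=
  fun i => if i == ord0 then sigma1 Hm else sigma2 Hm.

(* Main.v *)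
Require Import Defs.
From HB Require Import structures.
From mathcomp Require Import all_boot all_order all_algebra.
From mathcomp Require Import reals.
From mathcomp Require Import zify ring lra.
Set Implicit Arguments. Unset Strict Implicit. Unset Printing Implicit Defensive.
Import Order.TTheory GRing.Theory Num.Theory.
Local Open Scope ring_scope.

Ltac nlia := repeat match goal with
 | H : is_true (@Order.le _ _ _ _) |- _ => clear H
 | H : is_true (@Order.lt _ _ _ _) |- _ => clear H
 | H : @eq (GRing.Nmodule.sort _) _ _ |- _ => clear H
 | H : @eq (Num.NumDomain.sort _) _ _ |- _ => clear H
 | H : @eq (Real.sort _) _ _ |- _ => clear H
 | H : consistent _ _ _ |- _ => clear H
 | H : is_metric _ |- _ => clear H
 end; lia.

Section Gen.
Variable R : realType.

Definition hzd (T : eqType) (h z : T -> R) (p q : T) : R :=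
  if p == q then 0 else h p + h q + `|z p - z q|.

Lemma hzd_metric (T : eqType) (h z : T -> R) :
  (forall p, 0 <= h p) -> is_metric (hzd h z).
Proof.
move=> h0; split.
- move=> x y; rewrite /hzd; case: eqP => // _.
  have := h0 x; have := h0 y; have := normr_ge0 (z x - z y); lra.
- move=> x y; rewrite /hzd eq_sym; case: (y =P x) => // _.
  by rewrite [h x + _]addrC distrC.
- move=> x y w; rewrite /hzd.
  have [->|nxw] := eqVneq x w.
    rewrite ?eqxx; case: ifP => _; case: ifP => _;
    have := h0 w; have := h0 y; have := normr_ge0 (z w - z y);
    have := normr_ge0 (z y - z w); lra.
  rewrite ?(negbTE nxw).
  have [<-|nxy] := eqVneq x y; first by rewrite ?eqxx ?(negbTE nxw) add0r.
  rewrite ?(negbTE nxy).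
  have [<-|nyw] := eqVneq y w.
    rewrite ?eqxx addr0; have := h0 y; lra.
  rewrite ?(negbTE nyw).
  have := ler_distD (z y) (z x) (z w).
  have := h0 x; have := h0 y; have := h0 w; lra.
- by move=> x; rewrite /hzd eqxx.
Qed.

Variables (alpha : R) (Ha0 : 0 < alpha) (Ha1 : alpha < 1).

Lemma lim_le0 (X C delta : R) : 0 <= C -> 0 < delta ->
  (forall eps, 0 < eps -> eps < delta -> X <= C * eps) -> X <= 0.
Proof.
move=> C0 d0 H; rewrite leNgt; apply/negP => X0.
set eps := delta * X / (X + C * delta + 1).
have den0 : 0 < X + C * delta + 1 by have := mulr_ge0 C0 (ltW d0); lra.
have e0 : 0 < eps by rewrite /eps divr_gt0 // mulr_gt0.
have e1 : eps < delta.
  rewrite /eps ltr_pdivrMr //.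
  have := mulr_ge0 (ltW d0) (mulr_ge0 C0 (ltW d0)); nra.
have := H eps e0 e1.
have : C * eps < X.
  rewrite /eps mulrA ltr_pdivrMr //.
  have := mulr_ge0 (mulr_ge0 C0 (ltW d0)) (ltW X0).
  have := mulr_gt0 X0 X0. nra.
lra.
Qed.

Lemma powdiff (b : R) (k : nat) : alpha <= b -> b <= 1 ->
  b ^+ k <= alpha ^+ k + k%:R * (b - alpha).
Proof.
move=> ab b1; elim: k => [|k IH]; first by rewrite !expr0 mul0r addr0.
rewrite !exprS -natr1.
have h1 : 0 <= alpha ^+ k <= 1 by rewrite exprn_ge0 ?exprn_ile1 // ltW.
have h2 : 0 <= b ^+ k by rewrite exprn_ge0 // (le_trans (ltW Ha0)).
have h3 : 0 <= k%:R :> R by [].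
have : b * b ^+ k <= b * (alpha ^+ k + k%:R * (b - alpha)).
  by rewrite ler_wpM2l // (le_trans (ltW Ha0)).
move: h1 => /andP[h1 h1'].
have : b * (k%:R * (b - alpha)) <= k%:R * (b - alpha).
  rewrite -[X in _ <= X]mul1r ler_wpM2r // mulr_ge0 // subr_ge0 //.
have : (b - alpha) * alpha ^+ k <= (b - alpha).
  rewrite -[X in _ <= X]mulr1 ler_wpM2l // subr_ge0 //.
nra.
Qed.
Lemma near_ok (x0 y0 xb yb A : R) : 0 <= A -> A ^+ 2 <= A -> 0 <= x0 -> 0 <= y0 ->
  x0 <= xb -> y0 <= yb -> (x0 + y0) * (1 + A ^+ 2) <= (1 + 2 * A - A ^+ 2) * (xb + yb).
Proof.
move=> A0 A2 hx hy h1 h2.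
have h : x0 + y0 <= xb + yb by lra.
have c : 1 + A ^+ 2 <= 1 + 2 * A - A ^+ 2 by lra.
have p : 0 <= 1 + A ^+ 2 by rewrite addr_ge0 // exprn_ge0.
apply: (le_trans (ler_wpM2r p h)); rewrite mulrC ler_wpM2r //; lra.
Qed.
Lemma far_ok (x0 y0 xb yb A : R) : 0 <= A -> A <= 1 -> 0 <= x0 -> 0 <= y0 -> 0 <= xb -> 0 <= yb ->
  x0 <= A * xb -> A * y0 <= yb -> y0 <= yb + xb + x0 ->
  (x0 + y0) * (1 + A ^+ 2) <= (1 + 2 * A - A ^+ 2) * (xb + yb).
Proof.
move=> A0 A1 hx0 hy0 hxb hyb h1 h2 tri.
have hA2 : A * A <= A by rewrite -[X in _ <= X]mulr1 ler_wpM2l.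
have e1 : (1 - A * A) * y0 <= (1 - A * A) * (yb + xb + x0).
  by rewrite ler_wpM2l // subr_ge0 (le_trans hA2).
have e2 : 2 * (A * A) * y0 <= 2 * A * yb.
  by rewrite -!mulrA ler_wpM2l // ler_wpM2l.
have e3 : 2 * x0 <= 2 * A * xb by rewrite -mulrA ler_wpM2l.
have e4 : 0 <= A * A * xb by rewrite !mulr_ge0.
rewrite -subr_ge0.
have -> : (1 + 2 * A - A ^+ 2) * (xb + yb) - (x0 + y0) * (1 + A ^+ 2) =
  ((1 - A * A) * (yb + xb + x0) - (1 - A * A) * y0) + (2 * A * yb - 2 * (A * A) * y0)
  + (2 * A * xb - 2 * x0) by ring.
by apply: addr_ge0; [apply: addr_ge0|]; rewrite subr_ge0.
Qed.

End Gen.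

Section Main.
Variables (R : realType) (alpha : R) (Ha0 : 0 < alpha) (Ha1 : alpha < 1).
Variables (m k : nat) (Hk : (0 < k)%N) (Hmk : m = k.*2 \/ m = k.*2.+1).
Variables (E : election 2 m) (a0 : 'I_m) (Ha0v : val a0 = 0%N).
Hypothesis HE1 : forall j, (j < m)%N -> val (rank (E ord0) j) = j.
Hypothesis HS1 : forall j, (j < m)%N -> strong (E ord0) j = (j < k)%N.
Hypothesis HE2 : forall j, (j < m)%N -> val (rank (E ord_max) j) =
  if (j < k.*2)%N then ((j + k) %% k.*2)%N else j.
Hypothesis HS2 : forall j, (j < m)%N -> strong (E ord_max) j = false.

Lemma SC2 (d : point 2 m -> point 2 m -> R) b :
  SC d b = d (inl ord0) (inr b) + d (inl ord_max) (inr b).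
Proof.
rewrite /SC big_ord_recr big_ord1 /=; congr (d (inl _) _ + _); exact: val_inj.
Qed.

Section Chain.
Variables (d : point 2 m -> point 2 m -> R) (Hd : is_metric d)
  (Hc : consistent alpha E d).
Definition f i j := d (inl i) (inr (rank (E i) j)).

Lemma f_ge0 i j : 0 <= f i j.
Proof. by case: Hd => h _ _ _; apply: h. Qed.

Lemma f_mono i n j : (j + n < m)%N -> f i j <= f i (j + n).
Proof.
elim: n => [|n IH] H; first by rewrite addn0.
have H1 : (j + n < m)%N by nlia.
apply: (le_trans (IH H1)).
have := @Hc i (j + n) ltac:(nlia).
rewrite -addnS /= -/(f i (j + n)) -/(f i (j + n.+1)).
case: (strong _ _) => [h|/andP[h _]] //.
apply: (le_trans h); rewrite -[X in _ <= X]mul1r ler_wpM2r ?f_ge0 // ltW //.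
Qed.

Lemma f_strong i n j : (j + n < m)%N ->
  (forall l, (j <= l < j + n)%N -> strong (E i) l) ->
  f i j <= alpha ^+ n * f i (j + n).
Proof.
elim: n => [|n IH] H Hs; first by rewrite addn0 expr0 mul1r.
have H1 : (j + n < m)%N by nlia.
have := IH H1 (fun l hl => Hs l ltac:(nlia)).
have := @Hc i (j + n) ltac:(nlia).
rewrite -addnS /= -/(f i (j + n)) -/(f i (j + n.+1)).
rewrite Hs; last by nlia.
move=> h1 h2; apply: (le_trans h2).
rewrite exprSr -mulrA ler_wpM2l // exprn_ge0 // ltW //.
Qed.

Lemma f_weak i n j : (j + n < m)%N ->
  (forall l, (j <= l < j + n)%N -> ~~ strong (E i) l) ->
  alpha ^+ n * f i (j + n) <= f i j.
Proof.
elim: n => [|n IH] H Hs; first by rewrite addn0 expr0 mul1r.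
have H1 : (j + n < m)%N by nlia.
have := IH H1 (fun l hl => Hs l ltac:(nlia)).
have := @Hc i (j + n) ltac:(nlia).
rewrite -addnS /= -/(f i (j + n)) -/(f i (j + n.+1)).
rewrite (negbTE (Hs _ _)); last by nlia.
case/andP=> _ h1 h2; apply: le_trans h2.
rewrite exprSr -mulrA ler_wpM2l ?exprn_ge0 ?ltW //.
Qed.

Lemma f_at i j a : (j < m)%N -> val (rank (E i) j) = val a ->
  d (inl i) (inr a) = f i j.
Proof. by move=> _ h; rewrite /f (val_inj h). Qed.

Lemma upper b :
  SC d a0 * (1 + (alpha ^+ k) ^+ 2) <= (1 + 2 * alpha ^+ k - (alpha ^+ k) ^+ 2) * SC d b.
Proof.
set A := alpha ^+ k.
have km : (k < m)%N by case: Hmk => ->; nlia.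
have k2m : (k.*2 <= m)%N by case: Hmk => ->; nlia.
have bm : (val b < m)%N := ltn_ord b.
have A0 : 0 <= A by rewrite exprn_ge0 // ltW.
have A1 : A <= 1 by rewrite exprn_ile1 // ltW.
rewrite !SC2.
have ex0 : d (inl ord0) (inr a0) = f ord0 0.
  by apply: f_at; [nlia| rewrite HE1 ?Ha0v //; nlia].
have ey0 : d (inl ord_max) (inr a0) = f ord_max k.
  apply: f_at => //; rewrite HE2 // ifT; last by nlia.
  by rewrite Ha0v addnn modnn.
have tri : d (inl ord_max) (inr a0) <=
    d (inl ord_max) (inr b) + d (inl ord0) (inr b) + d (inl ord0) (inr a0).
  case: Hd => _ sym tr _.
  apply: (le_trans (tr _ (inr b) _)).
  rewrite -addrA lerD2l.
  by apply: (le_trans (tr _ (inl ord0) _)); rewrite (sym (inr b)).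
have xb : d (inl ord0) (inr b) = f ord0 (val b).
  by apply: f_at; [exact: ltn_ord | rewrite HE1 ?ltn_ord].
move: tri; rewrite ex0 ey0 xb.
have hx0 := f_ge0 ord0 0; have hy0 := f_ge0 ord_max k.
have hxb := f_ge0 ord0 (val b).
have hyb := f_ge0 ord_max 0.
have hA2 : 0 <= A ^+ 2 by rewrite exprn_ge0.
have hA2' : A ^+ 2 <= A by rewrite expr2 -[X in _ <= X]mulr1 ler_wpM2l.
case: (ltnP (val b) k) => tb.
-
  have eyb : d (inl ord_max) (inr b) = f ord_max (val b + k).
    apply: f_at; first nlia.
    rewrite HE2; last nlia.
    rewrite ifT; last nlia.
    rewrite -addnA addnn modnDr modn_small //; nlia.
  rewrite eyb => _.
  have h1 : f ord0 0 <= f ord0 (val b).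
    by have := f_mono ord0 (n:=val b) (j:=0) ltac:(nlia); rewrite add0n.
  have h2 : f ord_max k <= f ord_max (val b + k).
    by rewrite addnC; apply: f_mono; nlia.
  apply: near_ok => //; exact: f_ge0.
case: (ltnP (val b) k.*2) => tb2.
-
  have eyb : d (inl ord_max) (inr b) = f ord_max (val b - k).
    apply: f_at; first nlia.
    rewrite HE2; last nlia.
    rewrite ifT; last nlia.
    rewrite subnK // modn_small //.
  rewrite eyb => tri.
  have h1 : f ord0 0 <= A * f ord0 (val b).
    have h : f ord0 0 <= A * f ord0 k.
      have := f_strong (i:=ord0) (n:=k) (j:=0) ltac:(nlia).
      rewrite add0n; apply => l hl; rewrite HS1; nlia.
    apply: (le_trans h); rewrite ler_wpM2l //.
    have := f_mono ord0 (n := val b - k) (j := k) ltac:(nlia).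
    by rewrite subnKC.
  have h2 : A * f ord_max k <= f ord_max (val b - k).
    have h : alpha ^+ (k - (val b - k)) * f ord_max k <= f ord_max (val b - k).
      have := f_weak (i:=ord_max) (n := k - (val b - k)) (j := val b - k) ltac:(nlia).
      have -> : (val b - k + (k - (val b - k)) = k)%N by nlia.
      apply => l hl; rewrite HS2 //; nlia.
    apply: le_trans h; rewrite ler_wpM2r ?f_ge0 //.
    rewrite /A ler_wiXn2l // ?ltW //; nlia.
  apply: far_ok => //; try exact: f_ge0; lra.
- (* dummy *)
  have eyb : d (inl ord_max) (inr b) = f ord_max (val b).
    apply: f_at => //; rewrite HE2 // ifF //; nlia.
  rewrite eyb => _.
  have h1 : f ord0 0 <= f ord0 (val b).
    by have := f_mono ord0 (n:=val b) (j:=0) ltac:(nlia); rewrite add0n.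
  have h2 : f ord_max k <= f ord_max (val b).
    have := f_mono ord_max (n := val b - k) (j := k) ltac:(nlia).
    by rewrite subnKC //; nlia.
  apply: near_ok => //; exact: f_ge0.
Qed.
End Chain.

Lemma modr j : (k <= j < k.*2)%N -> ((j + k) %% k.*2 = j - k)%N.
Proof.
move=> h; have -> : (j + k = (j - k) + k.*2)%N by nlia.
rewrite modnDr modn_small //; nlia.
Qed.

Lemma agent2 (i : 'I_2) : i = ord0 \/ i = ord_max.
Proof. by case: i => [[|[|//]]] hi; [left|right]; apply: val_inj. Qed.

Section Constr.
Variables (beta : R) (Hb0 : alpha < beta) (Hb1 : beta < 1).
Definition cA := alpha ^+ k.
Definition cB := beta ^+ k.
Definition cY := (1 + cA) / (1 - cB).
Definition cL := cY - cA.

Definition xv (t : nat) : R := if (t < k)%N then alpha ^+ (k - t) else 1.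
Definition yv (t : nat) : R := if (t < k)%N then cL + alpha ^+ (k - t)
  else if (t < k.*2)%N then cY * beta ^+ (k.*2 - t) else cL + alpha.

Definition hp (p : point 2 m) : R := match p with inl _ => 0 | inr a => (xv a + yv a - cL) / 2 end.
Definition zp (p : point 2 m) : R := match p with
  inl i => if i == ord0 then cL else 0 | inr a => (cL + yv a - xv a) / 2 end.
Definition dd := hzd hp zp.

Lemma beta0 : 0 < beta. Proof. exact: lt_trans Hb0. Qed.
Lemma A0 : 0 < cA. Proof. by rewrite exprn_gt0. Qed.
Lemma B0 : 0 < cB. Proof. by rewrite exprn_gt0 // beta0. Qed.
Lemma B1 : cB < 1. Proof. by rewrite exprn_ilt1 ?(ltW beta0) // -lt0n. Qed.
Lemma AB : cA <= cB.
Proof. by rewrite /cA /cB lerXn2r // ?nnegrE ?(ltW Ha0) ?(ltW beta0) // ltW. Qed.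
Lemma Aa : cA <= alpha.
Proof.
rewrite /cA -[X in _ <= X]expr1 ler_wiXn2l // ltW //.
Qed.
Lemma YB : cY * (1 - cB) = 1 + cA.
Proof. rewrite /cY divfK // subr_eq0; apply/eqP => h; by have := B1; rewrite -h ltxx. Qed.
Lemma Y0 : 0 < cY.
Proof. rewrite /cY divr_gt0 //; first by have := A0; lra. by have := B1; lra. Qed.
Lemma LYB : cL = 1 + cY * cB.
Proof. have := YB; rewrite /cL mulrBr mulr1; lra. Qed.
Lemma L1 : 1 <= cL.
Proof. rewrite LYB; have := mulr_gt0 Y0 B0; lra. Qed.

Lemma cLA : cL + cA = cY. Proof. by rewrite /cL subrK. Qed.
Lemma cA_def : cA = alpha ^+ k. Proof. by []. Qed.
Lemma cB_def : cB = beta ^+ k. Proof. by []. Qed.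
Local Opaque cL cY cA cB.

Lemma xv_le t : (t <= k)%N -> xv t = alpha ^+ (k - t).
Proof.
rewrite /xv; case: ltnP => // h1 h2.
by have -> : (k - t = 0)%N by nlia. 
Qed.

Lemma real_ok t : (t < m)%N ->
  [/\ yv t - xv t <= cL, xv t - yv t <= cL & cL <= xv t + yv t].
Proof.
move=> tm; have hL := L1; have hY := Y0; have hA := A0.
rewrite /xv /yv; case: ltnP => t1.
  have := exprn_ge0 (k - t) (ltW Ha0); split; lra.
case: ltnP => t2.
  have hb : beta ^+ (k.*2 - t) <= 1 by rewrite exprn_ile1 // ltW // beta0.
  have hb' : cB <= beta ^+ (k.*2 - t).
    by rewrite cB_def ler_wiXn2l // ?(ltW beta0) ?(ltW Hb1) //; nlia.
  have hb0 : 0 <= beta ^+ (k.*2 - t) by rewrite exprn_ge0 // ltW // beta0.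
  have e1 : cY * beta ^+ (k.*2 - t) <= cY by rewrite -[X in _ <= X]mulr1 ler_wpM2l // ltW.
  have e2 : cY * cB <= cY * beta ^+ (k.*2 - t) by rewrite ler_wpM2l // ltW.
  have e3 : 0 <= cY * beta ^+ (k.*2 - t) by rewrite mulr_ge0 // ltW.
  have := LYB; have := A0; have : cA <= 1 by rewrite cA_def exprn_ile1 // ltW.
  have LY : cL = cY - cA by rewrite -cLA addrK. split; lra.
have := Ha1; have := Ha0. move: hL. generalize cL. move=> LL *; split; lra. Qed.

Lemma hp_ge0 p : 0 <= hp p.
Proof.
case: p => [//|a] /=; have [_ _ h] := real_ok (ltn_ord a).
rewrite divr_ge0 //; lra.
Qed.

Lemma dd_metric : is_metric dd.
Proof. exact: hzd_metric hp_ge0. Qed.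

Lemma dd_x (a : 'I_m) : dd (inl ord0) (inr a) = xv a.
Proof.
rewrite /dd /hzd /hp /zp /= ?eqxx add0r.
have [h1 h2 _] := real_ok (ltn_ord a).
rewrite ger0_norm; last by rewrite subr_ge0 ler_pdivrMr //; lra.
lra.
Qed.

Lemma dd_y (a : 'I_m) : dd (inl ord_max) (inr a) = yv a.
Proof.
rewrite /dd /hzd /hp /zp /= add0r.
have [h1 h2 _] := real_ok (ltn_ord a).
rewrite sub0r normrN ger0_norm; last by rewrite divr_ge0 //; lra.
lra.
Qed.

Definition g (j : nat) : R := if (j < k)%N then cY * beta ^+ (k - j)
  else if (j < k.*2)%N then cL + alpha ^+ (k.*2 - j) else cL + alpha.

Lemma xr j : (j < m)%N -> dd (inl ord0) (inr (rank (E ord0) j)) = xv j.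
Proof. by move=> h; rewrite dd_x HE1. Qed.

Lemma yr j : (j < m)%N -> dd (inl ord_max) (inr (rank (E ord_max) j)) = g j.
Proof.
move=> h; rewrite dd_y HE2 // /g /yv.
case: (ltnP j k) => h1.
  have -> : (j < k.*2)%N = true by nlia.
  rewrite modn_small; last by nlia.
  have -> : (j + k < k)%N = false by nlia.
  have -> : (j + k < k.*2)%N = true by nlia.
  by have -> : (k.*2 - (j + k) = k - j)%N by nlia.
case: (ltnP j k.*2) => h2.
  rewrite modr; last by nlia.
  have -> : (j - k < k)%N = true by nlia.
  by have -> : (k - (j - k) = k.*2 - j)%N by nlia.
have -> : (j < k)%N = false by nlia.
by have -> : (j < k.*2)%N = false by nlia.
Qed.

Lemma dd_cons : consistent alpha E dd.
Proof.
move=> i j hj /=; have hj' : (j < m)%N by nlia.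
have b0 := beta0; have hA0 := A0; have hY0 := Y0; have hL1 := L1.
case: (agent2 i) => ->.
- rewrite HS1 // !xr //.
  case: ltnP => jk.
    rewrite !xv_le; try nlia.
    have -> : (k - j = (k - j.+1).+1)%N by nlia.
    by rewrite exprS.
  rewrite /xv.
  try (have -> : (j < k)%N = false by nlia).
  try (have -> : (j.+1 < k)%N = false by nlia).
  by rewrite mulr1 lexx Ha1.
- rewrite HS2 // !yr //; rewrite /g.
  case: (ltnP j.+1 k) => h1.
    try (have -> : (j < k)%N = true by nlia).
    try (have -> : (j.+1 < k)%N = true by nlia).
    have -> : (k - j = (k - j.+1).+1)%N by nlia.
    set n := (k - j.+1)%N.
    have P0 : 0 < cY * beta ^+ n by rewrite mulr_gt0 // exprn_gt0.
    rewrite exprS mulrCA.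
    apply/andP; split.
      by rewrite -[X in _ <= X]mul1r ler_wpM2r // ?ltW.
    by rewrite ltr_pM2r.
  case: (ltnP j k) => h2.
    have ejk : j.+1 = k by nlia.
    rewrite ejk.
    try (have -> : (k < k.*2)%N = true by nlia).
    have -> : (k - j = 1)%N by nlia.
    have -> : (k.*2 - k = k)%N by nlia.
    have e : cL + alpha ^+ k = cY by rewrite -cA_def cLA.
    rewrite e expr1.
    apply/andP; split.
      by rewrite -[X in _ <= X]mulr1 ler_wpM2l // ?ltW.
    by rewrite mulrC ltr_pM2l.
  try (have -> : (j < k)%N = false by nlia).
  try (have -> : (j.+1 < k)%N = false by nlia).
  case: (ltnP j.+1 k.*2) => h3.
    try (have -> : (j < k.*2)%N = true by nlia).
    have -> : (k.*2 - j = (k.*2 - j.+1).+1)%N by nlia.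
    set n := (k.*2 - j.+1)%N.
    have P0 : 0 < alpha ^+ n by rewrite exprn_gt0.
    have P1 : alpha * alpha ^+ n <= alpha ^+ n.
      by rewrite -[X in _ <= X]mul1r ler_wpM2r // ?ltW.
    have P2 : alpha * cL < cL by rewrite -[X in _ < X]mul1r ltr_pM2r //; lra.
    rewrite exprS; apply/andP; split; first lra.
    by rewrite mulrDr; lra.
  try (have -> : (j < k.*2)%N = true by nlia).
  try (have -> : (j.+1 < k.*2)%N = false by nlia).
  have -> : (k.*2 - j = 1)%N by nlia.
  rewrite expr1 lexx /=.
  have P : 0 < cL + alpha by rewrite addr_gt0 // (lt_le_trans ltr01 hL1).
  by rewrite -[X in _ < X]mul1r ltr_pM2r.
Qed.

Lemma SC_dd (a : 'I_m) : SC dd a = xv a + yv a.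
Proof. by rewrite SC2 dd_x dd_y. Qed.

Lemma dd_ratio : ratio_set alpha E a0 ((cL + 2 * cA) / cL).
Proof.
have hL1 := L1; have hA0 := A0; have hY0 := Y0; have b0 := beta0.
have km : (k < m)%N by case: Hmk => ->; nlia.
exists dd; split; [exact: dd_metric | exact: dd_cons |].
exists cL; split; [split| lra |].
- exists (Ordinal km); rewrite SC_dd /xv /yv /= ltnn.
  have -> : (k < k.*2)%N = true by nlia.
  have -> : (k.*2 - k = k)%N by nlia.
  by rewrite LYB cB_def.
- move=> b; rewrite SC_dd.
  by have [_ _ h] := real_ok (ltn_ord b).
- rewrite SC_dd Ha0v /xv /yv Hk subn0; congr (_ / _).
  rewrite -cA_def; ring.
Qed.

Lemma ratio_ineq u : (cL + 2 * cA) / cL <= u -> 1 + 2 * cA - u <= (1 + u) * cA * cB.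
Proof.
have hL1 := L1; have hB1 := B1.
have L0 : 0 < cL by apply: lt_le_trans hL1.
rewrite ler_pdivrMr // => h.
have hB : 0 <= 1 - cB by rewrite subr_ge0 ltW.
have := ler_wpM2r hB h.
have e : cL * (1 - cB) = 1 + cA * cB.
  have := YB; rewrite -cLA; move=> e.
  have -> : cL * (1 - cB) = (cL + cA) * (1 - cB) - cA * (1 - cB) by ring.
  by rewrite e; ring.
have -> : (cL + 2 * cA) * (1 - cB) = cL * (1 - cB) + 2 * cA - 2 * (cA * cB) by ring.
have -> : u * cL * (1 - cB) = u * (cL * (1 - cB)) by ring.
rewrite e.
have -> : (1 + u) * cA * cB = cA * cB + u * (cA * cB) by ring.
have -> : u * (1 + cA * cB) = u + u * (cA * cB) by ring.
move=> h2.
set P := cA * cB in h2 *; set Q := u * P in h2 *.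
lra.
Qed.

End Constr.

Theorem main_dist : dist_is alpha E a0
  ((1 + 2 * alpha ^+ k - (alpha ^+ k) ^+ 2) / ((alpha ^+ k) ^+ 2 + 1)).
Proof.
set A := alpha ^+ k.
have A0 : 0 < A by rewrite exprn_gt0.
have A1 : A < 1 by rewrite exprn_ilt1 ?ltW // -lt0n.
have den : 0 < A ^+ 2 + 1 by rewrite ltr_pwDr // exprn_ge0 // ltW.
split.
  move=> r [d [Hd Hc [v [[[b Hb] Hmin] v0 ->]]]].
  rewrite ler_pdivrMr // mulrAC ler_pdivlMr // -Hb (addrC _ 1).
  exact: upper.
move=> u Hu.
have key : forall beta, alpha < beta -> beta < 1 ->
    1 + 2 * A - u <= (1 + u) * A * beta ^+ k.
  move=> beta b0 b1; exact: (ratio_ineq b0 b1 (Hu _ (dd_ratio b0 b1))).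
have pd : forall b, alpha <= b -> b <= 1 -> b ^+ k <= A + k%:R * (b - alpha).
  by move=> b h1 h2; exact: powdiff.
clearbody A.
have ha0 := Ha0; have ha1 := Ha1.
have hb0 : alpha < (alpha + 1) / 2 by lra.
have hb1 : (alpha + 1) / 2 < 1 by lra.
have u1 : 0 <= 1 + u.
  rewrite leNgt; apply/negP => hu.
  have := key _ hb0 hb1.
  have : 0 <= A * ((alpha + 1) / 2) ^+ k.
    by rewrite mulr_ge0 ?exprn_ge0 // ?ltW // (lt_trans Ha0).
  move=> h1 h2.
  have : (1 + u) * (A * ((alpha + 1) / 2) ^+ k) <= 0.
    by rewrite mulr_le0_ge0 // ltW.
  rewrite mulrA; lra.
have C0 : 0 <= (1 + u) * A * k%:R by rewrite !mulr_ge0 // ltW.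
have lim := lim_le0 (X := 1 + 2 * A - u - (1 + u) * A * A) C0 (delta := 1 - alpha).
have : 1 + 2 * A - u - (1 + u) * A * A <= 0.
  apply: lim; first lra.
  move=> eps e0 e1.
  have b0 : alpha < alpha + eps by lra.
  have b1 : alpha + eps < 1 by lra.
  have h := key _ b0 b1.
  have := pd _ (ltW b0) (ltW b1).
  rewrite addrAC subrr add0r => hp.
  have : (1 + u) * A * (alpha + eps) ^+ k <= (1 + u) * A * (A + k%:R * eps).
    by rewrite ler_wpM2l // mulr_ge0 // ltW.
  move=> h3.
  have -> : (1 + u) * A * k%:R * eps = (1 + u) * A * (A + k%:R * eps) - (1 + u) * A * A by ring.
  lra.
move=> hX.
rewrite ler_pdivrMr //.
have -> : u * (A ^+ 2 + 1) = u + u * (A * A) by rewrite expr2; ring.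
have -> : 1 + 2 * A - A ^+ 2 = 1 + 2 * A - A * A by rewrite expr2.
have eX : 1 + 2 * A - u - (1 + u) * A * A = 1 + 2 * A - u - A * A - u * (A * A) by ring.
rewrite eX in hX.
set P := A * A in hX *; set Q := u * P in hX *.
lra.
Qed.
End Main.

Definition E_odd (m k : nat) (Hm : (0 < m)%N) : election 2 m :=
  fun i => if i == ord0 then Pref (ord_mod Hm) (fun j => (j < k)%N)
  else Pref (fun j => ord_mod Hm (if (j < k.*2)%N then ((j + k) %% k.*2)%N else j))
            (fun _ => false).

Lemma E_odd_valid (m k : nat) (Hm : (0 < m)%N) : m = k.*2.+1 -> (0 < k)%N ->
  valid_election (E_odd k Hm).
Proof.
move=> Hmk Hk i; rewrite /E_odd; case: (agent2 i) => ->; rewrite ?eqxx /=.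
  split.
    by move=> j1 j2 h1 h2 /(congr1 val) /=; rewrite !modn_small.
  move=> a; exists (val a); first exact: ltn_ord.
  by apply: val_inj; rewrite /= modn_small.
have k2 : (0 < k.*2)%N by nlia.
have bnd : forall j, (j < m)%N -> ((if (j < k.*2)%N then ((j + k) %% k.*2)%N else j) < m)%N.
  move=> j hj; case: ifP => // _; have := ltn_pmod (j + k) k2; nlia.
split.
  move=> j1 j2 h1 h2 /(congr1 val) /=; rewrite (modn_small (bnd _ h1)) (modn_small (bnd _ h2)).
  case: ifP => hj1; case: ifP => hj2.
  - move/eqP; rewrite eqn_modDr => /eqP.
    by rewrite !modn_small.
  - have := ltn_pmod (j1 + k) k2; nlia.
  - have := ltn_pmod (j2 + k) k2; nlia.
  - by [].
move=> a; have := ltn_ord a; case: (ltnP (val a) k.*2) => ha am.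
  exists ((val a + k) %% k.*2)%N; first by have := ltn_pmod (val a + k) k2; nlia.
  apply: val_inj => /=.
  rewrite ifT; last exact: ltn_pmod.
  rewrite modnDml -addnA addnn modnDr !modn_small //; nlia.
exists (val a); first exact: ltn_ord.
by apply: val_inj => /=; rewrite ifF ?modn_small // ltnNge; apply/negbF; exact: ha.
Qed.

Unset Implicit Arguments. Set Strict Implicit.

Theorem lemma7 (R : realType) (alpha : R) (Ha0 : 0 < alpha) (Ha1 : alpha < 1) :
  (forall (m : nat) (Hm2 : (2 <= m)%N), ~~ odd m ->
     dist_is alpha (E_even (ltnW Hm2)) (ord_mod (ltnW Hm2) 0)
       ((1 + 2 * alpha ^+ (m./2) - alpha ^+ m) / (alpha ^+ m + 1)))
  /\
  (forall m : nat, (3 <= m)%N -> odd m ->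
     exists (n : nat) (E : election n m) (a1 : 'I_m),
       valid_election E /\
       dist_is alpha E a1
         ((1 + 2 * alpha ^+ (m.-1./2) - alpha ^+ m.-1) / (alpha ^+ m.-1 + 1))).
Proof.
split.
  move=> m Hm2 ev.
  have Hmk : m = (m./2).*2 by have := odd_double_half m; rewrite (negbTE ev) add0n.
  have Hk : (0 < m./2)%N by move: Hm2; rewrite {1}Hmk; nlia.
  have e : alpha ^+ m = (alpha ^+ m./2) ^+ 2 by rewrite -exprM muln2 -Hmk.
  rewrite e.
  apply: (main_dist Ha0 Ha1 Hk (or_introl Hmk)).
  - by rewrite /= mod0n.
  - by move=> j hj; rewrite /E_even eqxx /= modn_small.
  - by move=> j hj; rewrite /E_even eqxx.
  - move=> j hj; rewrite /E_even /= -Hmk ifT //.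
  - by [].
move=> m Hm3 od.
set k := m.-1./2.
have Hmk : m = k.*2.+1.
  have := odd_double_half m.-1.
  have : odd m.-1 = false.
    by move: od; case: m Hm3 {k} => //= m' _ /negbTE.
  move=> -> /=; rewrite add0n -/k; nlia.
have Hk : (0 < k)%N by nlia.
have Hm : (0 < m)%N by nlia.
have e1 : m.-1 = k.*2 by nlia.
rewrite e1.
have e : alpha ^+ k.*2 = (alpha ^+ k) ^+ 2 by rewrite -exprM muln2.
rewrite e.
exists 2%N, (E_odd k Hm), (ord_mod Hm 0); split; first exact: E_odd_valid.
apply: (main_dist Ha0 Ha1 Hk (or_intror Hmk)).
- by rewrite /= mod0n.
- by move=> j hj; rewrite /E_odd eqxx /= modn_small.
- by move=> j hj; rewrite /E_odd eqxx.
- move=> j hj; rewrite /E_odd /= modn_small //.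
  case: ifP => // _; have := ltn_pmod (j + k) (_ : (0 < k.*2)%N); nlia.
- by [].
Qed.
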